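(* Let $\alpha\in(0,\pi)$, $a\in A_N$, $d\in\{\pm1\}^N$, $\gamma_n=d_n-\cos\alpha$, $\mu^*_{a,d}=\sum_{n=1}^N\gamma_n\mu_{a_n}$, and \[ \lambda_n=\gamma_n\log(2-2a_n^2)+\sum_{k\ne n}\gamma_k\mu_{a_k}(a_n),\qquad n=1,\dots,N. \] Then there exists a constant $C=C(a)>0$ such that \[ \Big|\mu^*_{a,d}(a_n\pm r)-\lambda_n-\gamma_n\log\frac1r\Big|\le Cr \] for all $r\in(0,\rho(a)]$ and all $n=1,\dots,N$.
   Context: $A_N=\{a\in(-1,1)^N:-1<a_1<\dots<a_N<1\}$; $\rho(a)=\frac12\min\{2a_1+2,a_2-a_1,\dots,a_N-a_{N-1},2-2a_N\}$. Let $\mu(x_1)=\log(1+\sqrt{1-x_1^2})-\log|x_1|$ for $x_1\in(-1,1)\setminus\{0\}$ and, for $b\in(-1,1)$, $\mu_b(x_1)=\mu\big(\frac{x_1-b}{1-bx_1}\big)$ for $x_1\in(-1,1)\setminus\{b\}$. *)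

(* Defs.v *)
(* concrete reals R. Sequences indexed 0..N-1 (paper: 1..N). *)
From Stdlib Require Import Reals Lra List.
Import ListNotations.
Open Scope R_scope.

Definition in_A (N : nat) (a : nat -> R) : Prop :=
  (forall n : nat, (n < N)%nat -> -1 < a n < 1) /\
  (forall n : nat, (S n < N)%nat -> a n < a (S n)).

Definition rho (N : nat) (a : nat -> R) : R :=
  / 2 * fold_right Rmin (2 * a 0%nat + 2)
          ((2 - 2 * a (N - 1)%nat)
             :: map (fun k => a (k + 1)%nat - a k) (seq 0 (N - 1))).

Definition mu (x : R) : R := ln (1 + sqrt (1 - x ^ 2)) - ln (Rabs x).

Definition mu_b (b x : R) : R := mu ((x - b) / (1 - b * x)).

Definition gamma (alpha : R) (d : nat -> R) (n : nat) : R := d n - cos alpha.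

Definition mu_star (N : nat) (alpha : R) (a d : nat -> R) (x : R) : R :=
  fold_right Rplus 0 (map (fun k => gamma alpha d k * mu_b (a k) x) (seq 0 N)).

Definition lambda (N : nat) (alpha : R) (a d : nat -> R) (n : nat) : R :=
  gamma alpha d n * ln (2 - 2 * (a n) ^ 2) +
  fold_right Rplus 0
    (map (fun k => gamma alpha d k * mu_b (a k) (a n))
         (filter (fun k => negb (Nat.eqb k n)) (seq 0 N))).

(* Main.v *)
Require Import Defs.
From Stdlib Require Import Reals Lra Psatz List Lia Arith.
Import ListNotations.
Open Scope R_scope.

Lemma ln_le_sub1 u : 0 < u -> ln u <= u - 1.
Proof. intro H. pose proof (exp_ineq1_le (ln u)). rewrite exp_ln in H0 by lra. lra. Qed.

Lemma ln_diff_le u v : 0 < u -> 0 < v -> ln u - ln v <= (u - v) / v.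
Proof.
  intros Hu Hv. assert (ln (u / v) = ln u - ln v) as Hd.
  { unfold Rdiv. rewrite ln_mult, ln_Rinv; try lra. apply Rinv_0_lt_compat; lra. }
  rewrite <- Hd.
  pose proof (ln_le_sub1 (u/v)) as H.
  assert (0 < u / v) by (apply Rdiv_lt_0_compat; lra).
  specialize (H H0). unfold Rdiv in *. replace ((u - v) * / v) with (u * / v - 1). lra.
  field. lra.
Qed.

Lemma ln_lip m u v : 0 < m -> m <= u -> m <= v -> m * Rabs (ln u - ln v) <= Rabs (u - v).
Proof.
  intros Hm Hu Hv.
  pose proof (ln_diff_le u v ltac:(lra) ltac:(lra)) as H1.
  pose proof (ln_diff_le v u ltac:(lra) ltac:(lra)) as H2.
  assert (E1 : v * ((u - v) / v) = u - v) by (field; lra).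
  assert (E2 : u * ((v - u) / u) = v - u) by (field; lra).
  unfold Rabs; destruct (Rcase_abs (ln u - ln v)); destruct (Rcase_abs (u - v)); nra.
Qed.

Lemma sqrt_lip u v : 0 <= u -> 0 < v -> sqrt v * Rabs (sqrt u - sqrt v) <= Rabs (u - v).
Proof.
  intros Hu Hv.
  pose proof (sqrt_sqrt u Hu). pose proof (sqrt_sqrt v ltac:(lra)).
  pose proof (sqrt_pos u). pose proof (sqrt_lt_R0 v Hv).
  assert (E : u - v = (sqrt u - sqrt v) * (sqrt u + sqrt v)) by nra.
  rewrite E, Rabs_mult. rewrite (Rabs_right (sqrt u + sqrt v)) by lra.
  pose proof (Rabs_pos (sqrt u - sqrt v)). nra.
Qed.

Lemma sqrt01 T : 0 <= sqrt (1 - T^2) <= 1 /\ 1 - sqrt (1 - T^2) <= T^2.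
Proof.
  destruct (Rle_dec 0 (1 - T^2)) as [H|H].
  - pose proof (sqrt_sqrt _ H). pose proof (sqrt_pos (1 - T^2)). split; [split|]; nra.
  - rewrite sqrt_neg_0 by lra. split; [lra|nra].
Qed.

Lemma L1 T : Rabs (ln (1 + sqrt (1 - T^2)) - ln 2) <= T^2.
Proof.
  destruct (sqrt01 T) as [[H0 H1] H2].
  pose proof (ln_lip 1 (1 + sqrt (1 - T^2)) 2 ltac:(lra) ltac:(lra) ltac:(lra)).
  rewrite (Rabs_left1 (1 + sqrt (1 - T ^ 2) - 2)) in H; lra.
Qed.

Lemma L2 T U : -1 <= T <= 1 -> -1 < U < 1 ->
  sqrt (1 - U^2) * Rabs (ln (1 + sqrt (1 - T^2)) - ln (1 + sqrt (1 - U^2))) <= 2 * Rabs (T - U).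
Proof.
  intros HT HU.
  destruct (sqrt01 T) as [[H0 H1] _]. destruct (sqrt01 U) as [[H0' H1'] _].
  pose proof (ln_lip 1 _ _ ltac:(lra) (ltac:(lra) : 1 <= 1 + sqrt (1 - T^2)) (ltac:(lra) : 1 <= 1 + sqrt (1 - U^2))).
  replace (1 + sqrt (1 - T ^ 2) - (1 + sqrt (1 - U ^ 2))) with (sqrt (1 - T ^ 2) - sqrt (1 - U ^ 2)) in H by ring.
  pose proof (sqrt_lip (1 - T^2) (1 - U^2) ltac:(nra) ltac:(nra)).
  replace (1 - T^2 - (1 - U^2)) with ((U - T) * (U + T)) in H2 by ring.
  rewrite Rabs_mult in H2. rewrite (Rabs_minus_sym U T) in H2.
  assert (Rabs (U + T) <= 2) by (apply Rabs_le; lra).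
  pose proof (Rabs_pos (T - U)).
  apply Rle_trans with (sqrt (1 - U ^ 2) * Rabs (sqrt (1 - T ^ 2) - sqrt (1 - U ^ 2))).
  apply Rmult_le_compat_l; lra.
  apply Rle_trans with (1 := H2). nra.
Qed.

Definition tt (b x : R) := (x - b) / (1 - b * x).

Lemma div_helper p q m : 0 < m -> m * p <= q -> p <= / m * q.
Proof.
  intros Hm H. apply Rmult_le_reg_l with m; auto.
  rewrite <- Rmult_assoc, Rinv_r, Rmult_1_l by lra. exact H.
Qed.

Lemma c_bound b x : -1 < b < 1 -> -1 <= x <= 1 -> 1 - Rabs b <= 1 - b * x.
Proof. intros. unfold Rabs; destruct (Rcase_abs b); nra. Qed.

Lemma c_pos b : -1 < b < 1 -> 0 < 1 - Rabs b.
Proof. intros. unfold Rabs; destruct (Rcase_abs b); lra. Qed.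

Lemma c_le_1b2 b : -1 < b < 1 -> 1 - Rabs b <= 1 - b^2.
Proof. intros. unfold Rabs; destruct (Rcase_abs b); nra. Qed.

Lemma t_eq b x : -1 < b < 1 -> -1 <= x <= 1 -> tt b x * (1 - b * x) = x - b.
Proof. intros. pose proof (c_bound b x H H0). pose proof (c_pos b H). unfold tt. field. lra. Qed.

Lemma t_range b x : -1 < b < 1 -> -1 <= x <= 1 -> -1 <= tt b x <= 1.
Proof.
  intros. pose proof (t_eq b x H H0). pose proof (c_bound b x H H0). pose proof (c_pos b H).
  set (t := tt b x) in *. set (D := 1 - b * x) in *.
  assert (x - b <= D) by (unfold D; nra). assert (- (x - b) <= D) by (unfold D; nra).
  split; nra.
Qed.

Lemma t_range_strict b x : -1 < b < 1 -> -1 < x < 1 -> -1 < tt b x < 1.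
Proof.
  intros. assert (Hx : -1 <= x <= 1) by lra.
  pose proof (t_eq b x H Hx). pose proof (c_bound b x H Hx). pose proof (c_pos b H).
  set (t := tt b x) in *. set (D := 1 - b * x) in *.
  assert (x - b < D) by (unfold D; nra). assert (- (x - b) < D) by (unfold D; nra).
  split; nra.
Qed.

Lemma t_diff b x y : -1 < b < 1 -> -1 <= x <= 1 -> -1 <= y <= 1 ->
  Rabs (tt b x - tt b y) <= / (1 - Rabs b)^2 * Rabs (x - y).
Proof.
  intros Hb Hx Hy. pose proof (c_bound b x Hb Hx). pose proof (c_bound b y Hb Hy). pose proof (c_pos b Hb).
  pose proof (c_le_1b2 b Hb).
  apply div_helper. nra.
  assert (E : (tt b x - tt b y) * ((1 - b*x) * (1 - b*y)) = (x - y) * (1 - b^2)).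
  { unfold tt. field. lra. }
  assert (E2 : Rabs (tt b x - tt b y) * ((1 - b*x) * (1 - b*y)) = Rabs (x - y) * (1 - b^2)).
  { rewrite <- (Rabs_right ((1 - b*x) * (1 - b*y))) by nra. rewrite <- Rabs_mult, E, Rabs_mult.
    rewrite (Rabs_right (1 - b^2)) by nra. auto. }
  pose proof (Rabs_pos (tt b x - tt b y)). pose proof (Rabs_pos (x - y)).
  assert ((1 - Rabs b)^2 <= (1 - b*x) * (1 - b*y)) by nra.
  nra.
Qed.

Lemma abs_sub_le p q : Rabs (p - q) <= Rabs p + Rabs q.
Proof. unfold Rminus. eapply Rle_trans. apply Rabs_triang. rewrite Rabs_Ropp. lra. Qed.

Lemma own_term b : -1 < b < 1 -> exists K, 0 < K /\ forall x r, 0 < r -> -1 <= x <= 1 -> Rabs (x - b) = r ->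
  Rabs (mu_b b x - ln (2 - 2 * b ^ 2) - ln (1 / r)) <= K * r.
Proof.
  intros Hb. pose proof (c_pos b Hb) as Hc. set (c := 1 - Rabs b) in *.
  exists (/ c^2 * 2 + / c). split.
  { assert (0 < / c^2) by (apply Rinv_0_lt_compat; nra). assert (0 < / c) by (apply Rinv_0_lt_compat; nra). lra. }
  intros x r Hr Hx Hxr.
  pose proof (c_bound b x Hb Hx) as HD. fold c in HD. pose proof (c_le_1b2 b Hb) as Hc2. fold c in Hc2.
  pose proof (t_eq b x Hb Hx) as Ht.
  unfold mu_b, mu. fold (tt b x). set (T := tt b x) in *. set (D := 1 - b * x) in *.
  assert (HT : Rabs T = r / D).
  { assert (Rabs T * Rabs D = r) by (rewrite <- Rabs_mult, Ht; auto).
    rewrite (Rabs_right D) in H by lra. rewrite <- H. field. lra. }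
  assert (HlnT : ln (Rabs T) = ln r - ln D).
  { rewrite HT. unfold Rdiv. rewrite ln_mult, ln_Rinv; try lra. apply Rinv_0_lt_compat; lra. }
  assert (Hlnr : ln (1 / r) = - ln r).
  { unfold Rdiv. rewrite Rmult_1_l, ln_Rinv; lra. }
  assert (Hln2 : ln (2 - 2 * b^2) = ln 2 + ln (1 - b^2)).
  { rewrite <- ln_mult by lra. f_equal. ring. }
  rewrite HlnT, Hlnr, Hln2.
  replace (ln (1 + sqrt (1 - T ^ 2)) - (ln r - ln D) - (ln 2 + ln (1 - b ^ 2)) - - ln r)
    with ((ln (1 + sqrt (1 - T ^ 2)) - ln 2) - (ln (1 - b^2) - ln D)) by ring.
  eapply Rle_trans. apply abs_sub_le. rewrite Rmult_plus_distr_r.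
  apply Rplus_le_compat.
  - eapply Rle_trans. apply L1.
    assert (Hr2 : r < 2). { rewrite <- Hxr. unfold Rabs at 1; destruct (Rcase_abs (x - b)); lra. }
    assert (T^2 * D^2 = r^2). { rewrite <- (pow2_abs T), HT. field. lra. }
    rewrite Rmult_assoc. apply div_helper. nra.
    assert (c^2 <= D^2) by nra. assert (0 <= T^2) by nra.
    assert (c^2 * T^2 <= D^2 * T^2) by (apply Rmult_le_compat_r; lra). nra.
  - pose proof (ln_lip c (1 - b^2) D Hc Hc2 HD).
    replace (1 - b^2 - D) with (b * (x - b)) in H by (unfold D; ring).
    rewrite Rabs_mult, Hxr in H. apply div_helper; auto.
    assert (Rabs b <= 1) by (unfold c in *; lra). pose proof (Rabs_pos b). nra.
Qed.

Lemma other_term b y dl : -1 < b < 1 -> -1 < y < 1 -> 0 < dl -> dl <= Rabs (y - b) ->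
  exists K, 0 < K /\ forall x r, -1 <= x <= 1 -> Rabs (x - y) <= r -> dl <= Rabs (x - b) ->
  Rabs (mu_b b x - mu_b b y) <= K * r.
Proof.
  intros Hb Hy Hdl Hyb. pose proof (c_pos b Hb) as Hc. set (c := 1 - Rabs b) in *.
  assert (Hy' : -1 <= y <= 1) by lra.
  pose proof (t_range_strict b y Hb Hy) as HU.
  set (U := tt b y) in *.
  assert (Hq : 0 < sqrt (1 - U^2)) by (apply sqrt_lt_R0; nra).
  set (q := sqrt (1 - U^2)) in *.
  exists ((/ q * 2 + / (dl/2)) * / c^2). split.
  { assert (0 < / c^2) by (apply Rinv_0_lt_compat; nra). assert (0 < / q) by (apply Rinv_0_lt_compat; nra).
    assert (0 < / (dl/2)) by (apply Rinv_0_lt_compat; nra). nra. }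
  intros x r Hx Hxy Hxb.
  pose proof (t_range b x Hb Hx) as HT.
  pose proof (t_diff b x y Hb Hx Hy') as Hd. fold c U in Hd.
  unfold mu_b, mu. fold (tt b x) (tt b y). fold U. set (T := tt b x) in *. fold q.
  replace (ln (1 + sqrt (1 - T ^ 2)) - ln (Rabs T) - (ln (1 + q) - ln (Rabs U)))
    with ((ln (1 + sqrt (1 - T ^ 2)) - ln (1 + q)) - (ln (Rabs T) - ln (Rabs U))) by ring.
  assert (HTU : Rabs (T - U) <= / c^2 * r).
  { eapply Rle_trans. apply Hd. apply Rmult_le_compat_l; auto. left; apply Rinv_0_lt_compat; nra. }
  assert (Hlow : forall z, -1 <= z <= 1 -> dl <= Rabs (z - b) -> dl / 2 <= Rabs (tt b z)).
  { intros z Hz Hzb. pose proof (t_eq b z Hb Hz). pose proof (c_bound b z Hb Hz). fold c in H0.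
    assert (Rabs (tt b z) * Rabs (1 - b*z) = Rabs (z - b)) by (rewrite <- Rabs_mult; congruence).
    rewrite (Rabs_right (1 - b*z)) in H1 by lra.
    assert (1 - b*z <= 2) by (destruct (Rle_dec 0 b); nra).
    pose proof (Rabs_pos (tt b z)). nra. }
  pose proof (Hlow x Hx Hxb) as HlT. pose proof (Hlow y Hy' Hyb) as HlU. fold T in HlT. fold U in HlU.
  eapply Rle_trans. apply abs_sub_le. rewrite Rmult_assoc, Rmult_plus_distr_r.
  apply Rplus_le_compat.
  - pose proof (L2 T U HT HU) as H2. fold q in H2.
    rewrite Rmult_assoc. apply div_helper; [exact Hq|]. lra.
  - pose proof (ln_lip (dl/2) (Rabs T) (Rabs U) ltac:(lra) HlT HlU) as H3.
    apply div_helper. lra. eapply Rle_trans. apply H3.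
    eapply Rle_trans. apply Rabs_triang_inv2. exact HTU.
Qed.

Definition sumR (l : list R) := fold_right Rplus 0 l.

Lemma filter_notin n l : ~ In n l -> filter (fun k => negb (Nat.eqb k n)) l = l.
Proof.
  induction l as [|x l IH]; simpl; intros H; auto.
  destruct (Nat.eqb_spec x n). exfalso; apply H; auto. simpl. f_equal. apply IH. tauto.
Qed.

Lemma sum_split (f : nat -> R) n l : NoDup l -> In n l ->
  fold_right Rplus 0 (map f l) = f n + fold_right Rplus 0 (map f (filter (fun k => negb (Nat.eqb k n)) l)).
Proof.
  induction l as [|x l IH]; simpl; intros Hnd Hin. contradiction.
  inversion Hnd; subst.
  destruct (Nat.eqb_spec x n).
  - subst. simpl. rewrite filter_notin; auto.
  - simpl. destruct Hin as [Hin|Hin]. congruence. rewrite IH; auto. ring.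
Qed.

Lemma sum_sub (f g : nat -> R) l :
  fold_right Rplus 0 (map f l) - fold_right Rplus 0 (map g l) = fold_right Rplus 0 (map (fun k => f k - g k) l).
Proof. induction l; simpl; [ring|]. rewrite <- IHl. ring. Qed.

Lemma sum_bound (h : nat -> R) B l : (forall k, In k l -> Rabs (h k) <= B) ->
  Rabs (fold_right Rplus 0 (map h l)) <= INR (length l) * B.
Proof.
  induction l as [|x l IH]; intros H; cbn [length map fold_right].
  - rewrite Rabs_R0. simpl. lra.
  - rewrite S_INR. eapply Rle_trans. apply Rabs_triang.
    assert (Rabs (h x) <= B) by (apply H; left; auto). assert (Rabs (fold_right Rplus 0 (map h l)) <= INR (length l) * B) by (apply IH; intros; apply H; right; auto).
    assert (0 <= B). { eapply Rle_trans. apply Rabs_pos. apply (H x). left; auto. } lra.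
Qed.

Lemma fin_choice (P : nat -> R -> Prop) N :
  (forall k C C', P k C -> C <= C' -> P k C') ->
  (forall k, (k < N)%nat -> exists C, 0 < C /\ P k C) ->
  exists C, 0 < C /\ forall k, (k < N)%nat -> P k C.
Proof.
  intros Hmon. induction N as [|N IH]; intros H.
  - exists 1. split. lra. intros; lia.
  - destruct IH as [C1 [HC1 H1]]. intros; apply H; lia.
    destruct (H N ltac:(lia)) as [C2 [HC2 H2]].
    exists (Rmax C1 C2). split. eapply Rlt_le_trans. apply HC1. apply Rmax_l.
    intros k Hk. destruct (Nat.eq_dec k N).
    + subst. eapply Hmon. apply H2. apply Rmax_r.
    + eapply Hmon. apply H1. lia. apply Rmax_l.
Qed.

Lemma fold_min_le_init x0 l : fold_right Rmin x0 l <= x0.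
Proof. induction l; simpl. lra. eapply Rle_trans. apply Rmin_r. auto. Qed.

Lemma fold_min_le_in x0 l y : In y l -> fold_right Rmin x0 l <= y.
Proof.
  induction l; simpl; intros H. contradiction. destruct H.
  subst. apply Rmin_l. eapply Rle_trans. apply Rmin_r. auto.
Qed.

Lemma sorted N a : in_A N a -> forall i j, (i <= j)%nat -> (j < N)%nat -> a i <= a j.
Proof.
  intros [_ Hs] i j Hij. induction Hij; intros Hj. lra.
  eapply Rle_trans. apply IHHij. lia. left. apply Hs. lia.
Qed.

Lemma rho_gap N a m : (S m < N)%nat -> rho N a <= (a (S m) - a m) / 2.
Proof.
  intros H. unfold rho. assert (In (a (S m) - a m) ((2 - 2 * a (N - 1)%nat)
             :: map (fun k => a (k + 1)%nat - a k) (seq 0 (N - 1)))).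
  { right. replace (S m) with (m + 1)%nat by lia. apply (in_map (fun k => a (k + 1)%nat - a k)).
    apply in_seq. lia. }
  pose proof (fold_min_le_in (2 * a 0%nat + 2) _ _ H0). lra.
Qed.

Lemma rho_left N a : rho N a <= a 0%nat + 1.
Proof. unfold rho. pose proof (fold_min_le_init (2 * a 0%nat + 2) ((2 - 2 * a (N - 1)%nat)
             :: map (fun k => a (k + 1)%nat - a k) (seq 0 (N - 1)))). lra. Qed.

Lemma rho_right N a : rho N a <= 1 - a (N - 1)%nat.
Proof. unfold rho. pose proof (fold_min_le_in (2 * a 0%nat + 2) ((2 - 2 * a (N - 1)%nat)
             :: map (fun k => a (k + 1)%nat - a k) (seq 0 (N - 1))) (2 - 2 * a (N - 1)%nat) (or_introl eq_refl)). lra. Qed.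

Lemma geo_range N a n x r : in_A N a -> (n < N)%nat -> r <= rho N a -> Rabs (x - a n) <= r -> -1 <= x <= 1.
Proof.
  intros HA Hn Hr Hx. pose proof HA as [Hb _].
  assert (x - a n <= r /\ a n - x <= r) as [H1 H2].
  { unfold Rabs in Hx; destruct (Rcase_abs (x - a n)); lra. }
  split.
  - destruct n as [|m].
    + pose proof (rho_left N a). lra.
    + pose proof (rho_gap N a m Hn). pose proof (Hb m ltac:(lia)). lra.
  - destruct (Nat.eq_dec (S n) N).
    + pose proof (rho_right N a). replace (N - 1)%nat with n in H by lia. lra.
    + pose proof (rho_gap N a n ltac:(lia)). pose proof (Hb (S n) ltac:(lia)). lra.
Qed.

Lemma geo_sep N a n k x r : in_A N a -> (n < N)%nat -> (k < N)%nat -> k <> n -> r <= rho N a ->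
  Rabs (x - a n) <= r -> 0 < Rabs (a n - a k) /\ Rabs (a n - a k) / 2 <= Rabs (x - a k).
Proof.
  intros HA Hn Hk Hkn Hr Hx. pose proof HA as [_ Hs].
  assert (x - a n <= r /\ a n - x <= r) as [H1 H2].
  { unfold Rabs in Hx; destruct (Rcase_abs (x - a n)); lra. }
  destruct (Nat.lt_total k n) as [Hlt|[Hgt|Hgt]].
  - destruct n as [|m]. lia.
    pose proof (rho_gap N a m Hn). pose proof (sorted N a HA k m ltac:(lia) ltac:(lia)).
    pose proof (Hs m ltac:(lia)).
    rewrite (Rabs_right (a (S m) - a k)) by lra. rewrite (Rabs_right (x - a k)) by lra. lra.
  - lia.
  - pose proof (rho_gap N a n ltac:(lia)). pose proof (sorted N a HA (S n) k ltac:(lia) ltac:(lia)).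
    pose proof (Hs n ltac:(lia)).
    rewrite (Rabs_left (a n - a k)) by lra. rewrite (Rabs_left (x - a k)) by lra. lra.
Qed.

Lemma gamma_bound alpha d k : (d k = 1 \/ d k = -1) -> Rabs (gamma alpha d k) <= 2.
Proof.
  intros H. unfold gamma. pose proof (COS_bound alpha). apply Rabs_le. destruct H; rewrite H; lra.
Qed.

Lemma decomp N alpha a d n x : (n < N)%nat ->
  mu_star N alpha a d x - lambda N alpha a d n - gamma alpha d n * ln (1 / x) = 0 -> True.
Proof. auto. Qed.

Lemma dist_pos N a n k : in_A N a -> (n < N)%nat -> (k < N)%nat -> k <> n -> 0 < Rabs (a n - a k).
Proof.
  intros HA Hn Hk Hkn. pose proof HA as [_ Hs].
  destruct (Nat.lt_total k n) as [Hlt|[Hgt|Hgt]].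
  - destruct n as [|m]. lia. pose proof (sorted N a HA k m ltac:(lia) ltac:(lia)). pose proof (Hs m ltac:(lia)).
    rewrite Rabs_right; lra.
  - lia.
  - pose proof (sorted N a HA (S n) k ltac:(lia) ltac:(lia)). pose proof (Hs n ltac:(lia)).
    rewrite Rabs_left; lra.
Qed.

Definition Qn N a n C := forall alpha d, 0 < alpha < PI -> (forall n, (n < N)%nat -> d n = 1 \/ d n = -1) ->
  forall r, 0 < r <= rho N a -> forall s, (s = 1 \/ s = -1) ->
  Rabs (mu_star N alpha a d (a n + s * r) - lambda N alpha a d n
              - gamma alpha d n * ln (1 / r)) <= C * r.

Lemma per_n N a n : in_A N a -> (n < N)%nat -> exists C, 0 < C /\ Qn N a n C.
Proof.
  intros HA Hn. pose proof HA as [Hb _]. pose proof (Hb n Hn) as Hbn.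
  destruct (own_term (a n) Hbn) as [K0 [HK0 Hown]].
  destruct (fin_choice (fun k K => k <> n -> forall x r, -1 <= x <= 1 -> Rabs (x - a n) <= r ->
      Rabs (a n - a k) / 2 <= Rabs (x - a k) -> Rabs (mu_b (a k) x - mu_b (a k) (a n)) <= K * r) N)
    as [M [HM HMp]].
  { intros k C C' HP HC Hkn x r Hx Hxr Hxk. eapply Rle_trans. apply (HP Hkn x r); auto.
    assert (0 <= r) by (eapply Rle_trans; [apply Rabs_pos|exact Hxr]). nra. }
  { intros k Hk. destruct (Nat.eq_dec k n) as [e|ne].
    - exists 1. split. lra. intros; contradiction.
    - pose proof (dist_pos N a n k HA Hn Hk ne) as Hd.
      destruct (other_term (a k) (a n) (Rabs (a n - a k) / 2) (Hb k Hk) Hbn ltac:(lra) ltac:(lra))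
        as [K [HK HKp]].
      exists K. split; [exact HK|]. intros _ x r Hx Hxr Hxk. apply HKp; auto. }
  exists (2 * K0 + INR N * (2 * M)). split.
  { pose proof (pos_INR N). nra. }
  intros alpha d Hal Hd r Hr s Hs.
  set (x := a n + s * r).
  assert (Hxn : Rabs (x - a n) = r).
  { unfold x. replace (a n + s * r - a n) with (s * r) by ring. rewrite Rabs_mult.
    assert (Rabs s = 1) as ->. { destruct Hs; subst s. apply Rabs_R1. rewrite Rabs_left by lra. lra. } rewrite Rabs_right by lra. ring. }
  assert (Hxn' : Rabs (x - a n) <= r) by lra.
  pose proof (geo_range N a n x r HA Hn ltac:(lra) Hxn') as Hx.
  unfold mu_star, lambda.
  rewrite (sum_split (fun k => gamma alpha d k * mu_b (a k) x) n (seq 0 N) (seq_NoDup N 0)) by (apply in_seq; lia).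
  set (filt := filter (fun k : nat => negb (k =? n)%nat) (seq 0 N)).
  match goal with |- Rabs (?F + ?S1 - (?G + ?S2) - ?H) <= _ =>
    replace (F + S1 - (G + S2) - H) with
      (gamma alpha d n * (mu_b (a n) x - ln (2 - 2 * a n ^ 2) - ln (1 / r)) + (S1 - S2)) by ring end.
  rewrite sum_sub.
  eapply Rle_trans. apply Rabs_triang. rewrite Rmult_plus_distr_r.
  apply Rplus_le_compat.
  - rewrite Rabs_mult. pose proof (gamma_bound alpha d n (Hd n Hn)).
    pose proof (Hown x r ltac:(lra) Hx Hxn). pose proof (Rabs_pos (gamma alpha d n)).
    pose proof (Rabs_pos (mu_b (a n) x - ln (2 - 2 * a n ^ 2) - ln (1 / r))). nra.
  - eapply Rle_trans. apply (sum_bound _ (2 * M * r)).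
    + intros k Hk. unfold filt in Hk. apply filter_In in Hk as [Hk Hkn]. apply in_seq in Hk.
      assert (k <> n) by (intro E; rewrite E, Nat.eqb_refl in Hkn; discriminate).
      replace (gamma alpha d k * mu_b (a k) x - gamma alpha d k * mu_b (a k) (a n))
        with (gamma alpha d k * (mu_b (a k) x - mu_b (a k) (a n))) by ring.
      rewrite Rabs_mult. pose proof (gamma_bound alpha d k (Hd k ltac:(lia))).
      destruct (geo_sep N a n k x r HA Hn ltac:(lia) H ltac:(lra) Hxn') as [_ Hsep].
      pose proof (HMp k ltac:(lia) H x r Hx Hxn' Hsep).
      pose proof (Rabs_pos (gamma alpha d k)). pose proof (Rabs_pos (mu_b (a k) x - mu_b (a k) (a n))). nra.
    + assert (INR (length filt) <= INR N).
      { apply le_INR. unfold filt. eapply Nat.le_trans. apply filter_length_le. rewrite length_seq. lia. }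
      assert (0 <= 2 * M * r) by nra. nra.
Qed.

Theorem proposition2p8 (N : nat) (a : nat -> R) (Ha : in_A N a) :
  exists C : R, 0 < C /\
    forall (alpha : R) (d : nat -> R),
      0 < alpha < PI ->
      (forall n : nat, (n < N)%nat -> d n = 1 \/ d n = -1) ->
      forall (r : R) (n : nat), 0 < r <= rho N a -> (n < N)%nat ->
        Rabs (mu_star N alpha a d (a n + r) - lambda N alpha a d n
              - gamma alpha d n * ln (1 / r)) <= C * r /\
        Rabs (mu_star N alpha a d (a n - r) - lambda N alpha a d n
              - gamma alpha d n * ln (1 / r)) <= C * r.
Proof.
  destruct (fin_choice (Qn N a) N) as [C [HC HQ]].
  { intros k C C' HP HCC' alpha d Hal Hd r Hr s Hs. eapply Rle_trans. apply HP; auto. nra. }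
  { intros k Hk. apply per_n; auto. }
  exists C. split; auto. intros alpha d Hal Hd r n Hr Hn. split.
  - replace (a n + r) with (a n + 1 * r) by ring. apply HQ; auto.
  - replace (a n - r) with (a n + -1 * r) by ring. apply HQ; auto.
Qed.
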